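(* (ZFC.) Let $F\subseteq\mathsf{Agg}^{\sigma}$ be a set with $|F|\le\mathfrak{c}$. Then the $\sigma$-clone generated by $F$ has cardinality at most $\mathfrak{c}$.
   Context: $\mathfrak{c}=2^{\aleph_0}$; the axiom of choice is assumed. $\omega$ is the first infinite ordinal. For an arity $\alpha$ with $0<\alpha\le\omega$ (a positive integer $n=\{0,\dots,n-1\}$ or $\omega$), an $\alpha$-ary aggregation function is a function $f\colon[0,1]^{\alpha}\to[0,1]$ nondecreasing in each coordinate with $f$ equal to $0$ at the all-zero vector and $1$ at the all-one vector. $\mathsf{Agg}$ is the set of aggregation functions of finite arity, $\mathsf{Agg}^{\omega}$ the set of those of arity $\omega$, and $\mathsf{Agg}^{\sigma}=\mathsf{Agg}\cup\mathsf{Agg}^{\omega}$. For an $\alpha$-ary $f$ and $\beta$-ary functions $g_i$, $i<\alpha$ ($0<\alpha,\beta\le\omega$), the composition $f\circ(g_i:i<\alpha)$ is the $\beta$-ary function $\mathbf{x}\mapsto f((g_i(\mathbf{x}))_{i<\alpha})$. A $\sigma$-clone is a set of functions on $[0,1]$ of arities $\alpha$ with $0<\alpha\le\omega$ that contains all projections $p^{\alpha}_i((x_j)_{j<\alpha})=x_i$ ($i<\alpha$) and is closed under such compositions; the $\sigma$-clone generated by $F$ is the smallest $\sigma$-clone containing $F$. *)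

(* Defs.v *)
From Stdlib Require Import Reals.
Open Scope R_scope.

Definition I01 : Type := {x : R | 0 <= x <= 1}.
Definition I01_val (x : I01) : R := proj1_sig x.

Definition zero01 : I01 := exist _ 0 (conj (Rle_refl 0) Rle_0_1).
Definition one01 : I01 := exist _ 1 (conj Rle_0_1 (Rle_refl 1)).

Inductive arity : Type := AFin (n : nat) | AOmega.

Definition valid_arity (a : arity) : Prop :=
  match a with AFin n => (0 < n)%nat | AOmega => True end.

Definition idx (a : arity) : Type :=
  match a with AFin n => {i : nat | (i < n)%nat} | AOmega => nat end.


Definition op : Type := {a : arity & (idx a -> I01) -> I01}.

Definition coord_nondecreasing (a : arity) (f : (idx a -> I01) -> I01) : Prop :=
  forall (x y : idx a -> I01) (i : idx a),
    (forall j, j <> i -> x j = y j) ->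
    I01_val (x i) <= I01_val (y i) ->
    I01_val (f x) <= I01_val (f y).

Definition is_agg (a : arity) (f : (idx a -> I01) -> I01) : Prop :=
  valid_arity a /\ coord_nondecreasing a f /\
  f (fun _ => zero01) = zero01 /\ f (fun _ => one01) = one01.

Definition Agg_sigma (o : op) : Prop := is_agg (projT1 o) (projT2 o).

Definition sigma_clone (C : op -> Prop) : Prop :=
  (forall o, C o -> valid_arity (projT1 o)) /\
  (forall (a : arity), valid_arity a -> forall i : idx a,
      C (existT _ a (fun x => x i))) /\
  (forall (a b : arity) (f : (idx a -> I01) -> I01)
          (g : idx a -> (idx b -> I01) -> I01),
      C (existT _ a f) -> (forall i, C (existT _ b (g i))) ->
      C (existT (fun c => (idx c -> I01) -> I01) b (fun x => f (fun i => g i x)))).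

Definition generated_sigma_clone (F : op -> Prop) (o : op) : Prop :=
  forall C, sigma_clone C -> (forall p, F p -> C p) -> C o.

(* |X| <= c = 2^aleph_0, with the continuum represented by nat -> bool *)
Definition card_le_continuum {T : Type} (X : T -> Prop) : Prop :=
  exists h : {x : T | X x} -> (nat -> bool), forall u v, h u = h v -> u = v.

(* Main.v *)
Require Import Defs.
From Stdlib Require Import FunctionalExtensionality ProofIrrelevance ClassicalEpsilon List.
From mathcomp Require Import choice.

Inductive tree (F : op -> Prop) (b : arity) : Type :=
| TProj : idx b -> tree F b
| TApp : forall p : {o : op | F o}, (idx (projT1 (proj1_sig p)) -> tree F b) -> tree F b.
Arguments TProj {F b}.
Arguments TApp {F b}.

Fixpoint sem {F b} (t : tree F b) : (idx b -> I01) -> I01 :=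
  match t with
  | TProj i => fun x => x i
  | TApp p args => fun x => projT2 (proj1_sig p) (fun j => sem (args j) x)
  end.

Fixpoint tsubst {F a b} (t : tree F a) (ts : idx a -> tree F b) : tree F b :=
  match t with
  | TProj i => ts i
  | TApp p args => TApp p (fun j => tsubst (args j) ts)
  end.

Lemma sem_subst F a b (t : tree F a) (ts : idx a -> tree F b) x :
  sem (tsubst t ts) x = sem t (fun i => sem (ts i) x).
Proof.
  induction t as [i | p args IH]; simpl; auto.
  f_equal; extensionality j; auto.
Qed.

Definition enc (a : arity) : idx a -> nat :=
  match a return idx a -> nat with
  | AFin n => fun i => proj1_sig i
  | AOmega => fun i => i
  end.

Lemma enc_inj a i j : enc a i = enc a j -> i = j.
Proof.
  destruct a; simpl; auto.
  destruct i, j; simpl; intros ->; f_equal; apply proof_irrelevance.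
Qed.

Fixpoint info {F b} (h : {o | F o} -> nat -> bool) (t : tree F b)
  (l : list nat) (k : nat) : Prop :=
  match t, l with
  | TProj i, nil => match k with 0 => True | S k' => k' = enc b i end
  | TProj _, cons _ _ => False
  | TApp p _, nil => match k with 0 => False | S k' => h p k' = true end
  | TApp p args, cons j l' => exists jj, enc _ jj = j /\ info h (args jj) l' k
  end.

Lemma info_inj F b (h : {o | F o} -> nat -> bool)
  (hinj : forall u v, h u = h v -> u = v) (t1 t2 : tree F b) :
  (forall l k, info h t1 l k <-> info h t2 l k) -> t1 = t2.
Proof.
  revert t2.
  induction t1 as [i | p args IH]; intros t2; destruct t2 as [i' | q args']; intros E.
  - specialize (E nil (S (enc b i))); simpl in E. f_equal; apply enc_inj.
    apply (proj1 E); reflexivity.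
  - exfalso; apply (proj1 (E nil 0)); simpl; exact I.
  - exfalso; apply (proj2 (E nil 0)); simpl; exact I.
  - assert (p = q) as Hpq.
    { apply hinj; extensionality k; specialize (E nil (S k)); simpl in E.
      destruct (h p k), (h q k); auto.
      - discriminate (proj1 E eq_refl).
      - discriminate (proj2 E eq_refl). }
    subst q. f_equal. extensionality jj. apply IH. intros l k.
    specialize (E (enc _ jj :: l) k). simpl in E. split; intro H.
    + destruct (proj1 E (ex_intro _ jj (conj eq_refl H))) as [jj' [e H']].
      apply enc_inj in e; subst; auto.
    + destruct (proj2 E (ex_intro _ jj (conj eq_refl H))) as [jj' [e H']].
      apply enc_inj in e; subst; auto.
Qed.

Lemma gen_tree F (HF : forall f, F f -> Agg_sigma f) o :
  generated_sigma_clone F o ->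
  exists t : tree F (projT1 o), sem t = projT2 o.
Proof.
  intro G.
  apply (G (fun o => valid_arity (projT1 o) /\
                     exists t : tree F (projT1 o), sem t = projT2 o)).
  - split; [|split].
    + intros o' [v _]; exact v.
    + intros a v i; split; [exact v|]; exists (TProj i); reflexivity.
    + intros a b f g [va [t Ht]] Hg. simpl in *.
      assert (ts : forall i, {t : tree F b | sem t = g i}).
      { intro i; apply constructive_indefinite_description; apply Hg. }
      split.
      { destruct a; [exact (proj1 (Hg (exist _ 0 va))) | exact (proj1 (Hg 0))]. }
      exists (tsubst t (fun i => proj1_sig (ts i))).
      extensionality x. rewrite sem_subst, <- Ht. f_equal. extensionality i.
      rewrite (proj2_sig (ts i)); reflexivity.
  - intros p Fp. destruct p as [a f]. destruct (HF _ Fp) as [va _].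
    split; [exact va|].
    exists (TApp (exist _ (existT _ a f) Fp) (fun j => TProj j)). reflexivity.
Qed.

Definition arcode (a : arity) : nat := match a with AFin n => S n | AOmega => 0 end.

Lemma arcode_inj a b : arcode a = arcode b -> a = b.
Proof. destruct a, b; simpl; intro e; try discriminate; auto. Qed.

Definition keyT : Type := (nat * list nat * nat)%type.

Definition sk (n : nat) : keyT :=
  match @unpickle (prod (prod nat (seq.seq nat)) nat) n with Some x => x | None => (0, nil, 0) end.

Lemma sk_pickle (x : keyT) : sk (@pickle (prod (prod nat (seq.seq nat)) nat) x) = x.
Proof. unfold sk. rewrite pickleK. reflexivity. Qed.

Theorem theorem2 (F : op -> Prop) :
  (forall f, F f -> Agg_sigma f) ->
  card_le_continuum F ->
  card_le_continuum (generated_sigma_clone F).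
Proof.
  intros HF [h hinj].
  assert (ch : forall o, generated_sigma_clone F o ->
                 {t : tree F (projT1 o) | sem t = projT2 o}).
  { intros o G; apply constructive_indefinite_description; apply gen_tree; auto. }
  pose (P := fun (u : {x | generated_sigma_clone F x}) (key : keyT) =>
    match key with (sel, l, k) =>
      match sel with
      | 0 => k = arcode (projT1 (proj1_sig u))
      | S _ => info h (proj1_sig (ch _ (proj2_sig u))) l k
      end end).
  exists (fun u n => if excluded_middle_informative (P u (sk n)) then true else false).
  intros u v E.
  assert (EP : forall key, P u key <-> P v key).
  { intro key. pose proof (equal_f E (@pickle (prod (prod nat (seq.seq nat)) nat) key)) as E'.
    simpl in E'. rewrite sk_pickle in E'.
    destruct (excluded_middle_informative (P u key)), (excluded_middle_informative (P v key));
      try discriminate; tauto. }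
  destruct u as [[a f] Hu], v as [[a' f'] Hv].
  pose proof (proj1 (EP (0, nil, arcode a)) eq_refl) as Ea. simpl in Ea.
  apply arcode_inj in Ea. subst a'.
  assert (Et : proj1_sig (ch _ Hu) = proj1_sig (ch _ Hv)).
  { apply (info_inj F a h hinj). intros l k. exact (EP (1, l, k)). }
  assert (f = f').
  { pose proof (proj2_sig (ch _ Hu)) as e1. pose proof (proj2_sig (ch _ Hv)) as e2.
    rewrite Et in e1. simpl in e1, e2. congruence. }
  subst f'. f_equal. apply proof_irrelevance.
Qed.
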